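(* Let $n\ge5$ be odd and $M$ an $n\times n$ HW-matrix. There is no spin$^c$ set $S$ for $M$ with $|S|=n-1$.
   Context: $\mathcal S=\{0,1,2,3\}$ is the Klein four-group ($\mathbb Z_2$-vector space) with $x+x=0$, $1+2=3$, $1+3=2$, $2+3=1$. $\mathcal P_n$ is the power set of $\{1,\dots,n\}$ (addition = symmetric difference, product = intersection); $|U|_2=|U|\bmod 2$; $J_M(U)=\{j:\sum_{i\in U}M_{ij}=1\}$. $M$ is an HW-matrix if it has $1$ on the diagonal and $2$ or $3$ off the diagonal, all column sums are $0$, and $J_M(U)\ne\emptyset$ for all $U\ne\emptyset,\{1,\dots,n\}$. $S\in\mathcal P_n$ is a spin$^c$ set for $M$ if $|(J_M(U)+U)\cap S|_2=\binom{|U|}2\bmod 2$ for all $U\in\mathcal P_n$. *)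

(* Defs.v *)
From mathcomp Require Import all_boot all_algebra.
Set Implicit Arguments. Unset Strict Implicit. Unset Printing Implicit Defensive.

(* The Klein four-group S = {0,1,2,3}, encoded as the Z_2-vector space
   bool * bool:  0 = (false,false), 1 = (true,false), 2 = (false,true),
   3 = (true,true); addition is componentwise xor, so 1+2=3 etc. *)
Definition klein := (bool * bool)%type.
Definition k0 : klein := (false, false).
Definition k1 : klein := (true, false).
Definition k2 : klein := (false, true).
Definition k3 : klein := (true, true).
Definition kadd (x y : klein) : klein := (x.1 (+) y.1, x.2 (+) y.2).

Definition ksum n (M : 'M[klein]_n) (U : {set 'I_n}) (j : 'I_n) : klein :=
  \big[kadd/k0]_(i in U) M i j.

Definition JM n (M : 'M[klein]_n) (U : {set 'I_n}) : {set 'I_n} :=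
  [set j | ksum M U j == k1].

Definition symdiff n (A B : {set 'I_n}) : {set 'I_n} := (A :\: B) :|: (B :\: A).

Definition HW_matrix n (M : 'M[klein]_n) : Prop :=
  [/\ (forall i, M i i = k1),
      (forall i j, i != j -> M i j = k2 \/ M i j = k3),
      (forall j, ksum M [set: 'I_n] j = k0) &
      (forall U : {set 'I_n}, U != set0 -> U != [set: 'I_n] -> JM M U != set0)].

Definition spinc_set n (M : 'M[klein]_n) (S : {set 'I_n}) : Prop :=
  forall U : {set 'I_n},
    odd #|symdiff (JM M U) U :&: S| = odd 'C(#|U|, 2).

(* Main.v *)
Require Import Defs.
From mathcomp Require Import all_boot all_algebra zify.
Set Implicit Arguments. Unset Strict Implicit.
Lemma L1 (T : finType) (P Q : pred T) :
  odd #|[set i | P i && Q i]| = \big[addb/false]_(i | P i) Q i.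
Proof.
rewrite -sum1_card (big_morph odd oddD (id1 := false) (erefl (odd 0))).
rewrite big_mkcond [RHS]big_mkcond /=; apply: eq_bigr => i _.
by rewrite inE; case: (P i); case: (Q i).
Qed.

Lemma delta (T : finType) (P : pred T) i c :
  \big[addb/false]_(j | P j) ((j == i) && c) = P i && c.
Proof.
case Pi: (P i).
  rewrite (bigD1 i) //= eqxx big1 ?addbF // => j /andP[_ /negbTE ->] //.
rewrite big1 // => j Pj; case: eqP => // ji; by rewrite -ji Pj in Pi.
Qed.

Lemma big3 (T : finType) (F : T -> bool) a u v : a != u -> u != v -> v != a ->
  \big[addb/false]_(i in [set a; u; v]) F i = F a (+) F u (+) F v.
Proof.
move=> au uv va.
have h1 : a \notin [set u; v] by rewrite !inE negb_or au eq_sym va.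
have h2 : u \notin [set v] by rewrite inE.
rewrite -setUA big_setU1 // big_setU1 // big_set1 /=; by case: (F a); case: (F u); case: (F v).
Qed.

Lemma big2 (T : finType) (F : T -> bool) a u : a != u ->
  \big[addb/false]_(i in [set a; u]) F i = F a (+) F u.
Proof. by move=> au; rewrite big_setU1 ?big_set1 // inE. Qed.

Lemma ksumE n (M : 'M[klein]_n) U j :
  ksum M U j = (\big[addb/false]_(i in U) (M i j).1, \big[addb/false]_(i in U) (M i j).2).
Proof.
rewrite [LHS]surjective_pairing /ksum.
by rewrite (big_morph fst (id1:=false) (op1:=addb) (id2:=k0) (op2:=kadd) (fun x y => erefl) (erefl _))
           (big_morph snd (id1:=false) (op1:=addb) (id2:=k0) (op2:=kadd) (fun x y => erefl) (erefl _)).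
Qed.

Definition fM n (M : 'M[klein]_n) i j := (M i j).1.

Lemma JMP n (M : 'M[klein]_n) U j :
  (forall i j, (M i j).2 = (i != j)) ->
  (j \in JM M U) = (\big[addb/false]_(i in U) fM M i j) && ~~ \big[addb/false]_(i in U) (i != j).
Proof.
move=> H2; rewrite inE ksumE.
have -> : \big[addb/false]_(i in U) (M i j).2 = \big[addb/false]_(i in U) (i != j).
  by apply: eq_bigr => i _.
rewrite /k1 /fM; case: (\big[addb/false]_(i in U) (i != j)); by case: (\big[addb/false]_(i in U) (M i j).1).
Qed.

Lemma cyc (T : finType) (V : pred T) (t : T -> T -> bool) x0 :
  V x0 -> (forall i l, V i -> V l -> i != l -> t i l (+) t l i) ->
  (forall x, V x -> odd #|[set i | (V i && (i != x)) && t i x]|) ->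
  exists a u v, [/\ V a, V u & V v] /\ [/\ a != u, u != v & v != a] /\ [/\ t u a, t v u & t a v].
Proof.
move=> Vx0 Ht Hodd.
pose In y := [set i | (V i && (i != y)) && t i y].
case: (@arg_minnP T x0 V (fun y => #|In y|) Vx0) => a Va Hmin.
have : 0 < #|In a| by have := Hodd a Va; case: #|_|.
case/card_gt0P => u; rewrite inE => /andP[/andP[Vu ua] tua].
case: (boolP (In u \subset In a)) => sub.
  have pr : In u \proper In a.
    rewrite properE sub /=; apply/subsetPn; exists u; first by rewrite inE Vu ua tua.
    by rewrite inE eqxx andbF.
  have := proper_card pr; have := Hmin u Vu; rewrite /In; lia.
case/subsetPn: sub => v; rewrite !inE => /andP[/andP[Vv vu] tvu].
have va : v != a.
  apply/eqP => E; rewrite E in tvu; have := Ht a u Va Vu; rewrite eq_sym ua tvu tua; by move/(_ isT).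
rewrite Vv va /= => ntva.
exists a, u, v; split; first by []. split; first by by rewrite eq_sym ua eq_sym vu va.
split=> //; move: (Ht a v Va Vv); rewrite eq_sym va => /(_ isT).
by rewrite (negbTE ntva) addbF.
Qed.
Lemma constsum (T : finType) (P : pred T) c :
  \big[addb/false]_(i | P i) c = odd #|[set i | P i]| && c.
Proof.
case: c; last by rewrite andbF big1.
rewrite andbT; have -> : [set i | P i] = [set i | P i && true].
  by apply/setP => i; rewrite !inE andbT.
by rewrite L1.
Qed.

Theorem mainTheorem16 (n : nat) (M : 'M[klein]_n) :
  5 <= n -> odd n -> HW_matrix M ->
  ~ exists S : {set 'I_n}, spinc_set M S /\ #|S| = n.-1.
Proof.
move=> n5 nodd [Hd Ho Hc Hhw] [S [Hsp HS]].
have H2 : forall i j, (M i j).2 = (i != j).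
  move=> i j; case: (eqVneq i j) => [->|ij]; first by rewrite Hd.
  by case: (Ho i j ij) => ->.
have Hfd : forall i, fM M i i = true by move=> i; rewrite /fM Hd.
have [k Hk] : exists k, ~: S = [set k].
  apply/cards1P; have := cardsC S; rewrite card_ord HS; lia.
have memS : forall j, (j \in S) = (j != k).
  by move=> j; rewrite -[j \in S]negbK -in_setC Hk in_set1.
pose X i := \big[addb/false]_(j | j != k) fM M i j.
have Hpair : forall i l, i != l ->
    X i (+) X l (+) ((i != k) && fM M l i) (+) ((l != k) && fM M i l).
  move=> i l il; have := Hsp [set i; l]; rewrite cards2 il /=.
  have -> : symdiff (JM M [set i; l]) [set i; l] :&: S =
      [set j | (j != k) && ((j \in JM M [set i;l]) (+) (j \in [set i; l]))].
    apply/setP => j; rewrite [RHS]in_set in_setI in_setU !in_setD memS andbC.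
    by case: (j \in JM _ _); case: (j \in [set i; l]); case: (j != k).
  rewrite L1 => h.
  rewrite (eq_bigr (fun j => fM M i j (+) fM M l j (+) ((j == i) && fM M l i)
                    (+) ((j == l) && fM M i l))) in h; last first.
    move=> j _; rewrite JMP // !big2 // !inE.
    have il' : (i == l) = false by apply/negbTE.
    have li' : (l == i) = false by rewrite eq_sym il'.
    case: (eqVneq j i) => [->|ji].
      by rewrite ?eqxx ?il' ?li' Hfd /=; case: (fM M l i).
    case: (eqVneq j l) => [->|jl].
      rewrite ?eqxx ?il' ?li' Hfd /=. by case: (fM M i l).
    rewrite /=.
    by case: (fM M i j); case: (fM M l j).
  by move: h; rewrite !big_split /= !delta /X.
pose t i l := fM M i l (+) fM M k l.
have Htour : forall i l, i != k -> l != k -> i != l -> t i l (+) t l i.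
  move=> i l ik lk il.
  have h1 := Hpair k i; rewrite eq_sym ik eqxx /= in h1; have {}h1 := h1 isT.
  have h2 := Hpair k l; rewrite eq_sym lk eqxx /= in h2; have {}h2 := h2 isT.
  have h3 := Hpair i l il; rewrite ik lk /= in h3.
  move: h1 h2 h3; rewrite /t; case: (X k); case: (X i); case: (X l);
  case: (fM M i l); case: (fM M l i); case: (fM M k i); by case: (fM M k l).
have Hin : forall x, x != k -> odd #|[set i | ((i != k) && (i != x)) && t i x]|.
  move=> x xk; rewrite L1.
  have hc : (ksum M setT x).1 = false by rewrite Hc.
  rewrite ksumE /= (bigD1 k) ?in_setT // (bigD1 x) /= ?in_setT ?xk // in hc.
  rewrite (eq_bigl (fun i => (i != k) && (i != x))) in hc; last first.
    by move=> i; rewrite in_setT.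
  rewrite big_split /= constsum.
  have -> : #|[set i | (i != k) && (i != x)]| = n - 2.
    have := cardsC [set k; x]; rewrite cards2 eq_sym xk card_ord.
    have -> : ~: [set k; x] = [set i | (i != k) && (i != x)].
      by apply/setP => i; rewrite !inE negb_or.
    lia.
  rewrite oddB ?nodd; last by lia.
  move: hc; rewrite /fM Hd /=.
  case: (\big[addb/false]_(i | (i != k) && (i != x)) (M i x).1); by case: (M k x).1.
have [x0 x0S] : exists x0, x0 \in S.
  by apply/card_gt0P; rewrite HS; lia.
rewrite memS in x0S.
have [a [u [v [[Va Vu Vv] [[au uv va] [tua tvu tav]]]]]] :=
  @cyc _ (fun i => i != k) t x0 x0S Htour Hin.
have tau : t a u = false.
  by move: (Htour a u Va Vu au); rewrite tua; case: (t a u).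
have tuv : t u v = false.
  by move: (Htour u v Vu Vv uv); rewrite tvu; case: (t u v).
have tva : t v a = false.
  by move: (Htour v a Vv Va va); rewrite tav; case: (t v a).
have U0 : [set a; u; v] != set0 by apply/set0Pn; exists a; rewrite !inE eqxx.
have UT : [set a; u; v] != setT.
  apply/negP => /eqP E; have : k \in [set a; u; v] by rewrite E inE.
  by rewrite !inE !(eq_sym k) (negbTE Va) (negbTE Vu) (negbTE Vv).
have := Hhw _ U0 UT; apply/negP; rewrite negbK; apply/eqP/setP => j.
rewrite in_set0 JMP // !big3 //.
move: tua tvu tav tau tuv tva; rewrite /t.
have e1 : (a == u) = false by apply/negbTE.
have e2 : (u == a) = false by rewrite eq_sym e1.
have e3 : (u == v) = false by apply/negbTE.
have e4 : (v == u) = false by rewrite eq_sym e3.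
have e5 : (v == a) = false by apply/negbTE.
have e6 : (a == v) = false by rewrite eq_sym e5.
case: (eqVneq j a) => [->|ja].
  rewrite Hfd ?e1 ?e2 ?e3 ?e4 ?e5 ?e6 /=.
  by case: (fM M u a); case: (fM M v a); case: (fM M k a).
case: (eqVneq j u) => [->|ju].
  rewrite Hfd ?e1 ?e2 ?e3 ?e4 ?e5 ?e6 /=.
  by case: (fM M a u); case: (fM M v u); case: (fM M k u).
case: (eqVneq j v) => [->|jv].
  rewrite Hfd ?e1 ?e2 ?e3 ?e4 ?e5 ?e6 /=.
  by case: (fM M a v); case: (fM M u v); case: (fM M k v).
by rewrite ?(eq_sym a j) ?(eq_sym u j) ?(eq_sym v j) ?(negbTE ja) ?(negbTE ju) ?(negbTE jv) /= andbF.
Qed.
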